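(* Let $\mathcal C\subseteq 2^{[n]}$ and let $n$ be a $k$-piercing of $\mathcal C$ with associated interval $[\sigma,\tau]$. Then $$\mathrm{CF}(J_\mathcal C)=\mathrm{CF}(J_{\mathcal C\setminus n})\sqcup\{x_nx_i: i\in[n-1]\setminus\tau\}\sqcup\{x_n(1-x_j): j\in\sigma\}.$$
   Context: A code is a set $\mathcal C\subseteq 2^{[n]}$, $[n]=\{1,\dots,n\}$. Standing conventions: $\emptyset\in\mathcal C$; every neuron lies in some codeword; no two distinct neurons lie in exactly the same codewords. $\mathcal C\setminus n$ is the code on $[n-1]$ obtained by removing $n$ from every codeword. For $\sigma\subseteq\tau$, $[\sigma,\tau]=\{\gamma:\sigma\subseteq\gamma\subseteq\tau\}$, of rank $|\tau\setminus\sigma|$. The neuron $n$ is a $k$-piercing of $\mathcal C$ with associated interval $[\sigma,\tau]$ if $\sigma\subseteq\tau\subseteq[n-1]$, $[\sigma,\tau]$ has rank $k$, $[\sigma,\tau]\subseteq\mathcal C\setminus n$, and $\mathcal C=(\mathcal C\setminus n)\cup[\sigma\cup\{n\},\tau\cup\{n\}]$. A pseudo-monomial is $\prod_{i\in\alpha}x_i\prod_{j\in\beta}(1-x_j)$ with $\alpha\cap\beta=\emptyset$, ordered by divisibility. For a code $\mathcal D$ on $[m]$, $J_\mathcal D=\langle\rho_\gamma:\gamma\notin\mathcal D\rangle\subseteq\mathbb F_2[x_1,\dots,x_m]$ with $\rho_\gamma=\prod_{i\in\gamma}x_i\prod_{j\in[m]\setminus\gamma}(1-x_j)$, and $\mathrm{CF}(J_\mathcal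 D)$ is the set of minimal pseudo-monomials in $J_\mathcal D$. *)

(* Defs.v *)
From HB Require Import structures.
From mathcomp Require Import all_boot all_order all_algebra.
From mathcomp Require Import mpoly.
Set Implicit Arguments. Unset Strict Implicit. Unset Printing Implicit Defensive.
Import GRing.Theory.
Local Open Scope ring_scope.

(* Neurons of a code on [m] are indexed by 'I_m (0-based). A code is a
   {set {set 'I_m}}. *)

Definition code_conventions (m : nat) (C : {set {set 'I_m}}) : Prop :=
  [/\ set0 \in C,
      (forall i : 'I_m, exists2 c, c \in C & i \in c) &
      (forall i j : 'I_m, (forall c, c \in C -> (i \in c) = (j \in c)) -> i = j)].

(* [n-1] embedded in [n]: i |-> i (0-based), the last neuron is ord_max. *)
Definition wd (m : nat) (i : 'I_m) : 'I_m.+1 := widen_ord (leqnSn m) i.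

Definition code_del (m : nat) (C : {set {set 'I_m.+1}}) : {set {set 'I_m}} :=
  [set [set i : 'I_m | wd i \in c] | c : {set 'I_m.+1} in C].

Definition in_interval (m : nat) (sigma tau g : {set 'I_m}) : bool :=
  (sigma \subset g) && (g \subset tau).

Definition k_piercing (m k : nat) (C : {set {set 'I_m.+1}})
    (sigma tau : {set 'I_m}) : Prop :=
  [/\ sigma \subset tau,
      #|tau :\: sigma| = k,
      (forall g, in_interval sigma tau g -> g \in code_del C) &
      C = [set @wd m @: c | c : {set 'I_m} in code_del C]
          :|: [set ord_max |: (@wd m @: g) | g : {set 'I_m} in [set g | in_interval sigma tau g]]].

Notation poly2 m := {mpoly 'F_2[m]}.

Definition pm (m : nat) (a b : {set 'I_m}) : poly2 m :=
  (\prod_(i in a) 'X_i) * \prod_(j in b) (1 - 'X_j).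

Definition is_pm_pair (m : nat) (a b : {set 'I_m}) : bool := [disjoint a & b].

Definition rho (m : nat) (g : {set 'I_m}) : poly2 m := pm g (~: g).

Definition inJ (m : nat) (D : {set {set 'I_m}}) (p : poly2 m) : Prop :=
  exists c : {set 'I_m} -> poly2 m, p = \sum_(g | g \notin D) c g * rho g.

Definition pdvd (m : nat) (p q : poly2 m) : Prop := exists r, q = r * p.

Definition inCF (m : nat) (D : {set {set 'I_m}}) (a b : {set 'I_m}) : Prop :=
  [/\ is_pm_pair a b, inJ D (pm a b) &
      forall a' b', is_pm_pair a' b' -> inJ D (pm a' b') ->
        pdvd (pm a' b') (pm a b) -> pm a' b' = pm a b].

(* The three families on the right-hand side, as pairs (alpha, beta)
   on [n] = 'I_m.+1. *)
Definition fam1 (m : nat) (C : {set {set 'I_m.+1}}) (a b : {set 'I_m.+1}) : Prop :=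
  exists a0 b0 : {set 'I_m}, [/\ inCF (code_del C) a0 b0, a = @wd m @: a0 & b = @wd m @: b0].

Definition fam2 (m : nat) (tau : {set 'I_m}) (a b : {set 'I_m.+1}) : Prop :=
  exists i : 'I_m, [/\ i \notin tau, a = [set ord_max; wd i] & b = set0].

Definition fam3 (m : nat) (sigma : {set 'I_m}) (a b : {set 'I_m.+1}) : Prop :=
  exists j : 'I_m, [/\ j \in sigma, a = [set ord_max] & b = [set wd j]].

(* Main.v *)
Require Import Defs.
From HB Require Import structures.
From mathcomp Require Import all_boot all_order all_algebra.
From mathcomp Require Import mpoly.

Module Helpers.
Set Implicit Arguments. Unset Strict Implicit. Unset Printing Implicit Defensive.
Import GRing.Theory.
Section Alg.
Local Open Scope ring_scope.
Variable m : nat.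
Implicit Types a b g v : {set 'I_m}.

Lemma pmE a b : [disjoint a & b] -> pm a b =
  \prod_i (if i \in a then 'X_i else if i \in b then 1 - 'X_i else 1 : poly2 m).
Proof.
move=> dab; rewrite /pm (big_mkcond (fun i => i \in a)) (big_mkcond (fun i => i \in b)).
rewrite -big_split; apply: eq_bigr => i _ /=.
case: ifP => ia.
  have -> : (i \in b) = false by apply: (disjointFr dab).
  by rewrite mulr1.
by rewrite mul1r.
Qed.

Lemma rhoE g : rho g = \prod_i (if i \in g then 'X_i else 1 - 'X_i : poly2 m).
Proof.
rewrite /rho pmE; last by rewrite disjoints_subset setCK.
by apply: eq_bigr => i _; rewrite inE; case: (i \in g).
Qed.

Lemma pm_expand a b : [disjoint a & b] ->
  pm a b = \sum_(J : {set 'I_m} | (a \subset J) && [disjoint b & J]) rho J.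
Proof.
move=> dab; rewrite pmE //.
pose F i : poly2 m := if i \in b then 0 else 'X_i.
pose G i : poly2 m := if i \in a then 0 else 1 - 'X_i.
transitivity (\prod_i (F i + G i)).
  apply: eq_bigr => i _; rewrite /F /G.
  case: ifP => ia.
    have -> : (i \in b) = false by apply: (disjointFr dab).
    by rewrite addr0.
  by case: ifP => _; rewrite ?add0r // addrC subrK.
rewrite bigA_distr [RHS]big_mkcond; apply: eq_bigr => J _ /=.
case: ifP => cJ.
  move/andP: cJ => [aJ bJ]; rewrite rhoE; apply: eq_bigr => i _.
  case: ifP => iJ; rewrite /F /G.
    by have -> : (i \in b) = false by apply: (disjointFl bJ).
  by have -> : (i \in a) = false by apply/negbTE; apply: contraFN iJ => /(subsetP aJ).
move/negbT: cJ; rewrite negb_and => /orP [/subsetPn [i ia niJ] | ].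
  rewrite (bigD1 i) //= (negbTE niJ) /G ia mul0r //.
rewrite -setI_eq0 => /set0Pn [i]; rewrite inE => /andP [ib iJ].
by rewrite (bigD1 i) //= iJ /F ib mul0r.
Qed.

Definition ev v : 'I_m -> 'F_2 := fun i => if i \in v then 1 else 0.

Lemma evpm v a b : [disjoint a & b] ->
  (pm a b).@[ev v] = if (a \subset v) && [disjoint b & v] then 1 else 0.
Proof.
move=> dab; rewrite pmE // (big_morph _ (mevalM (ev v)) (meval1 (ev v))).
case: ifP => cv.
  move/andP: cv => [av bv]; apply: big1 => i _.
  case: ifP => ia; first by rewrite mevalXU /ev (subsetP av).
  case: ifP => ib; last by rewrite meval1.
  by rewrite mevalB meval1 mevalXU /ev (disjointFr bv ib) subr0.
move/negbT: cv; rewrite negb_and => /orP [/subsetPn [i ia niJ] | ].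
  by rewrite (bigD1 i) //= ia mevalXU /ev (negbTE niJ) mul0r.
rewrite -setI_eq0 => /set0Pn [i]; rewrite inE => /andP [ib iJ].
by rewrite (bigD1 i) //= (disjointFl dab ib) ib mevalB meval1 mevalXU /ev iJ subrr mul0r.
Qed.

Lemma evrho v g : (rho g).@[ev v] = if g == v then 1 else 0.
Proof.
rewrite /rho evpm; last by rewrite disjoints_subset setCK.
by rewrite disjoints_subset setCS eqEsubset.
Qed.

Definition vanish (D : {set {set 'I_m}}) a b : Prop :=
  forall c, c \in D -> a \subset c -> [disjoint b & c] -> False.

Lemma inJ_vanish D a b : [disjoint a & b] -> inJ D (pm a b) <-> vanish D a b.
Proof.
move=> dab; split.
  move=> [c E] c0 c0D ac bc.
  have := congr1 (meval (ev c0)) E.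
  rewrite evpm // ac bc /= (big_morph _ (mevalD (ev c0)) (meval0 (ev c0))) big1 ?oner_eq0 //.
  move=> g gD; rewrite mevalM evrho.
  case: eqP => [eg|]; last by rewrite mulr0.
  by move: gD; rewrite eg c0D.
move=> van; exists (fun g => if (a \subset g) && [disjoint b & g] then 1 else 0).
rewrite pm_expand // big_mkcond [RHS]big_mkcond; apply: eq_bigr => g _ /=.
case: ifP => cg; last by case: ifP; rewrite ?mul0r.
case: ifP => gD; first by rewrite mul1r.
by exfalso; move/andP: cg => [ag bg]; apply: (van g) => //; rewrite (negbFE gD).
Qed.

Lemma pdvd_iff a b a' b' : [disjoint a & b] -> [disjoint a' & b'] ->
  pdvd (pm a' b') (pm a b) <-> (a' \subset a) /\ (b' \subset b).
Proof.
move=> dab dab'; split.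
  move=> [r E].
  have H v : (a \subset v) && [disjoint b & v] ->
      (a' \subset v) && [disjoint b' & v].
    move=> cv; have := congr1 (meval (ev v)) E.
    rewrite evpm // cv mevalM evpm //; case: ifP => // _; rewrite mulr0 => /eqP.
    by rewrite oner_eq0.
  have /andP [a'a _] : (a' \subset a) && [disjoint b' & a].
    by apply: H; rewrite subxx disjoint_sym.
  have /andP [_ b'b] : (a' \subset ~: b) && [disjoint b' & ~: b].
    by apply: H; rewrite -disjoints_subset dab /= disjoints_subset setCK.
  by move: b'b; rewrite disjoints_subset setCK.
move=> [a'a b'b]; exists (pm (a :\: a') (b :\: b')).
rewrite /pm (big_setID a') (big_setID (A:=b) b') /=.
rewrite (setIidPr a'a) (setIidPr b'b).
by rewrite mulrACA mulrC.
Qed.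

Lemma pm_inj a b a' b' : [disjoint a & b] -> [disjoint a' & b'] ->
  pm a' b' = pm a b -> a' = a /\ b' = b.
Proof.
move=> dab dab' E.
have [h1 h2] : (a' \subset a) /\ (b' \subset b).
  by apply/(pdvd_iff dab dab'); exists 1; rewrite mul1r.
have [h3 h4] : (a \subset a') /\ (b \subset b').
  by apply/(pdvd_iff dab' dab); exists 1; rewrite mul1r.
by split; apply/eqP; rewrite eqEsubset ?h1 ?h2 ?h3 ?h4.
Qed.

Definition CFc (D : {set {set 'I_m}}) a b : Prop :=
  [/\ [disjoint a & b], vanish D a b &
      forall a' b', a' \subset a -> b' \subset b -> vanish D a' b' -> a' = a /\ b' = b].

Lemma inCF_iff D a b : inCF D a b <-> CFc D a b.
Proof.
split.
  move=> [dab J mn]; split => //; first exact/(inJ_vanish _ dab).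
  move=> a' b' a'a b'b v.
  have dab' : [disjoint a' & b'].
    by apply: (disjointWl a'a); apply: (disjointWr b'b).
  apply: pm_inj => //; apply: mn => //; first exact/(inJ_vanish _ dab').
  exact/(pdvd_iff dab dab').
move=> [dab v mn]; split => //; first exact/(inJ_vanish _ dab).
move=> a' b' dab' J dv.
have [h1 h2] := (pdvd_iff dab dab').1 dv.
by have [-> ->] := mn a' b' h1 h2 ((inJ_vanish _ dab').1 J).
Qed.

End Alg.
Lemma disj_of (T : finType) (A B : {set T}) :
  (forall x, x \in A -> x \in B -> False) -> [disjoint A & B].
Proof.
move=> H; rewrite -setI_eq0; apply/eqP/setP => x; rewrite !inE.
by apply/negbTE/negP => /andP [xa xb]; exact: H xa xb.
Qed.

Section Comb.
Variable m : nat.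
Local Notation N := (@ord_max m).
Local Notation W := (@wd m).
Definition res (c : {set 'I_m.+1}) : {set 'I_m} := [set i | wd i \in c].

Lemma wd_inj : injective (@wd m).
Proof. by move=> i j e; apply: val_inj; exact: (congr1 val e). Qed.

Lemma wd_neq i : (wd i == N) = false.
Proof. by apply/negbTE; rewrite -val_eqE /= neq_ltn ltn_ord. Qed.

Lemma wd_surj j : j != N -> exists i, j = wd i.
Proof.
move=> jn; have lt : (val j < m)%N.
  by move: jn (ltn_ord j); rewrite -val_eqE /= ltnS leq_eqVlt => /negbTE ->.
by exists (Ordinal lt); apply: val_inj.
Qed.

Lemma n_wd (g : {set 'I_m}) : (N \in W @: g) = false.
Proof. by apply/negbTE/negP => /imsetP [x _ /eqP]; rewrite eq_sym wd_neq. Qed.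

Lemma res_wd (g : {set 'I_m}) : res (W @: g) = g.
Proof. by apply/setP => i; rewrite inE mem_imset //; exact: wd_inj. Qed.

Lemma res_wdU (g : {set 'I_m}) : res (N |: W @: g) = g.
Proof. by apply/setP => i; rewrite !inE wd_neq mem_imset //; exact: wd_inj. Qed.

Lemma rebuild (c : {set 'I_m.+1}) : c = if N \in c then N |: W @: res c else W @: res c.
Proof.
apply/setP => j; case: (eqVneq j N) => [->|jn].
  by case: ifP => h; rewrite ?setU11 ?n_wd.
have [i ->] := wd_surj jn.
have e : (wd i \in W @: res c) = (wd i \in c) by rewrite mem_imset ?inE //; exact: wd_inj.
by case: ifP => _; rewrite ?inE ?wd_neq e.
Qed.

Lemma subset_split (a c : {set 'I_m.+1}) :
  (a \subset c) = ((N \in a) ==> (N \in c)) && (res a \subset res c).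
Proof.
apply/idP/idP.
  move=> ac; apply/andP; split; first by apply/implyP => /(subsetP ac).
  by apply/subsetP => i; rewrite !inE => /(subsetP ac).
move=> /andP [/implyP h /subsetP r]; apply/subsetP => j ja.
case: (eqVneq j N) => [e|jn]; first by rewrite e; apply: h; rewrite -e.
have [i e] := wd_surj jn; rewrite e in ja *.
by have := r i; rewrite !inE; apply.
Qed.

Lemma res_setC (c : {set 'I_m.+1}) : res (~: c) = ~: res c.
Proof. by apply/setP => i; rewrite !inE. Qed.

Lemma disjoint_split (b c : {set 'I_m.+1}) :
  [disjoint b & c] = ~~ ((N \in b) && (N \in c)) && [disjoint res b & res c].
Proof.
rewrite !disjoints_subset subset_split res_setC inE.
by case: (N \in b); case: (N \in c).
Qed.

Variables (C : {set {set 'I_m.+1}}) (sigma tau : {set 'I_m}).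
Hypothesis sub : forall g, in_interval sigma tau g -> g \in code_del C.
Hypothesis CE : C = [set @wd m @: c | c : {set 'I_m} in code_del C]
          :|: [set ord_max |: (@wd m @: g) | g : {set 'I_m} in [set g | in_interval sigma tau g]].

Lemma memC (c : {set 'I_m.+1}) : (c \in C) =
  if N \in c then in_interval sigma tau (res c) else res c \in code_del C.
Proof.
apply/idP/idP.
  rewrite {1}CE inE => /orP [].
    by move=> /imsetP [x xC] ->; rewrite n_wd res_wd.
  by move=> /imsetP [g gI] ->; rewrite setU11 res_wdU; rewrite inE in gI.
case pc: (N \in c) => h; rewrite {1}CE inE (rebuild c) pc; apply/orP; [right|left];
  by apply: imset_f; rewrite ?inE.
Qed.

Lemma vanish_split (a b : {set 'I_m.+1}) :
  vanish C a b <->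
  ((N \notin a) -> vanish (code_del C) (res a) (res b)) /\
  ((N \notin b) -> forall g, in_interval sigma tau g -> res a \subset g ->
      [disjoint res b & g] -> False).
Proof.
split.
  move=> V; split.
    move=> na c0 c0C ac0 bc0; apply: (V (W @: c0)).
    - by rewrite memC n_wd res_wd.
    - by rewrite subset_split n_wd res_wd (negbTE na).
    - by rewrite disjoint_split n_wd andbF res_wd.
  move=> nb g gI ag bg; apply: (V (N |: W @: g)).
  - by rewrite memC setU11 res_wdU.
  - by rewrite subset_split setU11 res_wdU implybT.
  - by rewrite disjoint_split (negbTE nb) res_wdU.
move=> [V1 V2] c; rewrite memC subset_split disjoint_split.
case pc: (N \in c) => h /andP [ia ra] /andP [nb rb].
  by apply: (V2 _ (res c)) => //; move: nb; rewrite andbT.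
by apply: (V1 _ (res c)) => //; move: ia; rewrite implybF.
Qed.

End Comb.
End Helpers.
Import Helpers.

Theorem lemma2p2 (m k : nat) (C : {set {set 'I_m.+1}}) (sigma tau : {set 'I_m}) :
  code_conventions C ->
  k_piercing k C sigma tau ->
  (forall a b : {set 'I_m.+1},
     inCF C a b <-> (fam1 C a b \/ fam2 tau a b \/ fam3 sigma a b)) /\
  (forall a b : {set 'I_m.+1},
     ~ (fam1 C a b /\ fam2 tau a b) /\ ~ (fam1 C a b /\ fam3 sigma a b) /\
     ~ (fam2 tau a b /\ fam3 sigma a b)).
Proof.
move=> [s0 nz _] [st _ sub CE].
have sI : in_interval sigma tau sigma by rewrite /in_interval subxx st.
have csig : ord_max |: @wd m @: sigma \in C by rewrite (memC CE) setU11 res_wdU.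
have VS := vanish_split CE.
split; last first.
  move=> a b; split; [|split].
  - move=> [[a0 [b0 [_ ea _]]] [i [_ ea' _]]].
    by have := set21 ord_max (wd i); rewrite -ea' ea n_wd.
  - move=> [[a0 [b0 [_ ea _]]] [j [_ ea' _]]].
    by have := set11 (@ord_max m); rewrite -ea' ea n_wd.
  - move=> [[i [_ _ eb]] [j [_ _ eb']]].
    by have := set11 (wd j); rewrite -eb' eb inE.
move=> a b; rewrite inCF_iff; split.
  move=> [dab V mn]; have [V1 V2] := (VS a b).1 V.
  case pa: (ord_max \in a).
    have pb : (ord_max \in b) = false by apply: (disjointFr dab); rewrite pa.
    right.
    have dAB : [disjoint res a & res b] by move: dab; rewrite disjoint_split => /andP [].
    case: (boolP [exists i, (i \in res a) && (i \notin tau)]) => [/existsP [i /andP [ia it]] | ni].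
      left; exists i.
      have [e1 e2] : ord_max |: @wd m @: [set i] = a /\ set0 = b.
        apply: mn.
        - by rewrite subset_split setU11 pa res_wdU /= sub1set ia.
        - exact: sub0set.
        - apply/(VS _ _).2; split; first by rewrite setU11.
          move=> _ g gI; rewrite res_wdU sub1set => ig _.
          move: gI => /andP [_ gt]; by move: it; rewrite (subsetP gt i ig).
      by split => //; rewrite -e1 imset_set1.
    case: (boolP [exists j, (j \in res b) && (j \in sigma)]) => [/existsP [j /andP [jb js]] | nj].
      right; exists j.
      have [e1 e2] : ord_max |: @wd m @: set0 = a /\ @wd m @: [set j] = b.
        apply: mn.
        - by rewrite subset_split setU11 pa res_wdU /= sub0set.
        - by rewrite subset_split n_wd res_wd /= sub1set jb.
        - apply/(VS _ _).2; split; first by rewrite setU11.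
          move=> _ g gI _; rewrite res_wd disjoints1 => /negP; apply.
          by move: gI => /andP [sg _]; exact: (subsetP sg j js).
      by split => //; rewrite -?e1 -?e2 ?imset0 ?setU0 ?imset_set1.
    exfalso; apply: (V2 (negbT pb) (sigma :|: res a)).
    - rewrite /in_interval subsetUl /= subUset st /=.
      apply/subsetP => i ia; move/existsPn: ni => ni.
      by have := ni i; rewrite ia /= negbK.
    - exact: subsetUr.
    - apply: disj_of => x xb; rewrite inE => /orP [xs | xa].
        by move/existsPn: nj => nj; have := nj x; rewrite xb xs.
      by move: xb; rewrite (disjointFr dAB xa).
  case pb: (ord_max \in b).
    exfalso.
    have [_ e2] : a = a /\ @wd m @: res b = b.
      apply: mn.
      - exact: subxx.
      - by rewrite subset_split n_wd res_wd subxx.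
      - apply/(VS _ _).2; rewrite res_wd; split => [_ | _ g gI]; first exact: V1 (negbT pa).
        move=> ag bg; have h := V1 (negbT pa). apply: (h g); [exact: sub gI | exact: ag | exact: bg].
    by move: pb; rewrite -e2 n_wd.
  left; exists (res a), (res b); split.
  - apply/inCF_iff; split.
    + by move: dab; rewrite disjoint_split => /andP [].
    + exact: V1 (negbT pa).
    + move=> a0 b0 a0a b0b V0.
      have [e1 e2] : @wd m @: a0 = a /\ @wd m @: b0 = b.
        apply: mn.
        - by rewrite subset_split n_wd res_wd.
        - by rewrite subset_split n_wd res_wd.
        - apply/(VS _ _).2; rewrite !res_wd; split => [_ | _ g gI] //.
          by move=> ag bg; apply: (V0 g); [exact: sub gI | exact: ag | exact: bg].
      by rewrite -e1 -e2 !res_wd.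
  - by rewrite {1}(rebuild a) pa.
  - by rewrite {1}(rebuild b) pb.
case => [[a0 [b0 [cf -> ->]]] | [[i [it -> ->]] | [j [js -> ->]]]].
- move/inCF_iff: cf => [d0 V0 mn0]; split.
  + by rewrite disjoint_split n_wd !res_wd d0.
  + apply/(VS _ _).2; rewrite !res_wd; split => [_|_ g gI]; first exact: V0.
    by move=> ag bg; apply: (V0 g); [exact: sub gI | exact: ag | exact: bg].
  + move=> a' b'; rewrite !subset_split !n_wd !res_wd !implybF => /andP [pa' ra] /andP [pb' rb] V'.
    have [V1 _] := (VS _ _).1 V'.
    have [e1 e2] := mn0 _ _ ra rb (V1 pa').
    by rewrite (rebuild a') (negbTE pa') e1 (rebuild b') (negbTE pb') e2.
- split.
  + by apply: disj_of => x _; rewrite inE.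
  + move=> c cC ac _.
    have nc : ord_max \in c := subsetP ac _ (set21 _ _).
    have wc : wd i \in c := subsetP ac _ (set22 _ _).
    move: cC; rewrite (memC CE) nc => /andP [_ rt].
    by move: it; rewrite (subsetP rt i) // inE.
  + move=> a' b' a'a; rewrite subset0 => /eqP -> V'; split => //.
    apply/eqP; rewrite eqEsubset a'a /=.
    apply/subsetP => x /set2P [->|->].
    * apply/negPn/negP => na; have [c cC ic] := nz (wd i).
      apply: (V' c cC); last by apply: disj_of => z; rewrite inE.
      apply/subsetP => y ya; have := subsetP a'a y ya; case/set2P => ey.
        by move: na; rewrite -ey ya.
      by rewrite ey.
    * apply/negPn/negP => na; apply: (V' _ csig); last by apply: disj_of => z; rewrite inE.
      apply/subsetP => y ya; have := subsetP a'a y ya; case/set2P => ey.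
        by rewrite ey setU11.
      by move: na; rewrite -ey ya.
- split.
  + by rewrite disjoints1 inE eq_sym wd_neq.
  + move=> c cC; rewrite sub1set disjoints1 => nc.
    move: cC; rewrite (memC CE) nc => /andP [sc _].
    have : j \in res c := subsetP sc j js.
    by rewrite inE => ->.
  + move=> a' b' a'a b'b V'.
    have na : ord_max \in a'.
      apply/negPn/negP => na; apply: (V' set0 s0); last by apply: disj_of => z _; rewrite inE.
      apply/subsetP => y ya; have := subsetP a'a y ya; rewrite inE => /eqP ey.
      by move: na; rewrite -ey ya.
    have nb : wd j \in b'.
      apply/negPn/negP => nb; apply: (V' _ csig).
        apply/subsetP => y ya; have := subsetP a'a y ya; rewrite inE => /eqP ->.
        exact: setU11.
      apply: disj_of => z zb _; have := subsetP b'b z zb; rewrite inE => /eqP ez.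
      by move: nb; rewrite -ez zb.
    by split; apply/eqP; rewrite eqEsubset ?a'a ?b'b sub1set ?na ?nb.
Qed.
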